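(* Let $B$ be a connected bipartite graph with parts $X$ and $Y$, and let $B'$ be the graph obtained from $B$ by adding three new vertices $x,z,y$ forming a path $xzy$, and making $x$ adjacent to every vertex of $X$ and $y$ adjacent to every vertex of $Y$. Then for every positive integer $d$, $B$ has boxicity at most $d$ if and only if $B'$ belongs to $(d+1)$-CBU.
   Context: The boxicity of a graph is the minimum $b$ such that the graph is the intersection graph of axis-parallel boxes in $\mathbb{R}^b$. Let $e_1,\ldots,e_k$ be the standard basis of $\mathbb{R}^k$. For $k\ge 1$, a graph belongs to $k$-CBU if one can assign to each vertex an axis-parallel box (product of $k$ closed intervals of positive length) in $\mathbb{R}^k$ such that the boxes have pairwise disjoint interiors, two distinct vertices are adjacent iff their boxes intersect, and any two intersecting boxes intersect in a $(k-1)$-dimensional box orthogonal to $e_1$. *)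

(* Defs.v *)
From HB Require Import structures.
From mathcomp Require Import all_boot all_order all_algebra.
From mathcomp Require Import reals.
Set Implicit Arguments. Unset Strict Implicit. Unset Printing Implicit Defensive.
Import Order.TTheory GRing.Theory Num.Theory.
Local Open Scope ring_scope.

Definition simple_graph (V : finType) (e : rel V) : Prop :=
  symmetric e /\ irreflexive e.

Definition connected_graph (V : finType) (e : rel V) : Prop :=
  forall x y : V, connect e x y.

Definition bipartite_parts (V : finType) (e : rel V) (X Y : {set V}) : Prop :=
  X :&: Y = set0 /\ X :|: Y = setT /\
  forall u v, e u v -> (u \in X /\ v \in Y) \/ (u \in Y /\ v \in X).

(* The graph B' on V + 'I_3: inr 0 = x, inr 1 = z, inr 2 = y; path x z y,
   x adjacent to all of X, y adjacent to all of Y. *)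
Definition extB (V : finType) (e : rel V) (X Y : {set V}) : rel (V + 'I_3) :=
  fun a b =>
    match a, b with
    | inl u, inl v => e u v
    | inl u, inr j | inr j, inl u =>
        ((val j == 0)%N && (u \in X)) || ((val j == 2)%N && (u \in Y))
    | inr i, inr j =>
        ((val i == 1)%N && ((val j == 0)%N || (val j == 2)%N)) ||
        ((val j == 1)%N && ((val i == 0)%N || (val i == 2)%N))
    end.

(* Boxes in R^k: vertex v gets the box prod_i [l v i, u v i]. *)
Definition boxes_meet (R : realType) (V : finType) (k : nat)
    (l u : V -> 'I_k -> R) (v w : V) : Prop :=
  forall i : 'I_k, l v i <= u w i /\ l w i <= u v i.

Definition box_rep (R : realType) (V : finType) (e : rel V) (k : nat)
    (l u : V -> 'I_k -> R) : Prop :=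
  (forall v i, l v i <= u v i) /\
  (forall v w, v != w -> (e v w <-> boxes_meet l u v w)).

Definition boxicity_le (R : realType) (V : finType) (e : rel V) (d : nat) : Prop :=
  exists l u : V -> 'I_d -> R, box_rep e l u.

(* k-CBU: boxes with positive-length sides, pairwise disjoint interiors,
   adjacency iff intersection, and intersecting boxes meet in a
   (k-1)-dimensional box orthogonal to e_1 (coordinate 0): the intersection
   in coordinate 0 is a single point and has positive length in every other
   coordinate. *)
Definition in_CBU (R : realType) (V : finType) (e : rel V) (k : nat) : Prop :=
  exists l u : V -> 'I_k -> R,
    (forall v i, l v i < u v i) /\
    (forall v w, v != w ->
       exists i : 'I_k, u v i <= l w i \/ u w i <= l v i) /\
    (forall v w, v != w -> (e v w <-> boxes_meet l u v w)) /\
    (forall v w, v != w -> boxes_meet l u v w ->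
       forall i : 'I_k,
         if (val i == 0)%N
         then Num.max (l v i) (l w i) = Num.min (u v i) (u w i)
         else Num.max (l v i) (l w i) < Num.min (u v i) (u w i)).

(* Main.v *)
Require Import Defs.
From HB Require Import structures.
From mathcomp Require Import all_boot all_order all_algebra.
From mathcomp Require Import reals.
From mathcomp Require Import lra.
Set Implicit Arguments. Unset Strict Implicit. Unset Printing Implicit Defensive.
Import Order.TTheory GRing.Theory Num.Theory.
Local Open Scope ring_scope.

Definition NB (R : realType) (A : Type) (d : nat) (f0 : A -> R) (fj : A -> 'I_d -> R)
  (a : A) (i : 'I_d.+1) : R :=
  if unlift ord0 i is Some j then fj a j else f0 a.

Lemma NB0 (R : realType) (A : Type) (d : nat) (f0 : A -> R) (fj : A -> 'I_d -> R) a :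
  NB f0 fj a ord0 = f0 a.
Proof. by rewrite /NB unlift_none. Qed.

Lemma NBl (R : realType) (A : Type) (d : nat) (f0 : A -> R) (fj : A -> 'I_d -> R) a j :
  NB f0 fj a (lift ord0 j) = fj a j.
Proof. by rewrite /NB liftK. Qed.

Lemma meet_split (R : realType) (A : finType) (d : nat) (l0 u0 : A -> R)
  (lj uj : A -> 'I_d -> R) a b :
  boxes_meet (NB l0 lj) (NB u0 uj) a b <->
  ((l0 a <= u0 b /\ l0 b <= u0 a) /\
   forall j, lj a j <= uj b j /\ lj b j <= uj a j).
Proof.
split.
  move=> H; split; first by have := H ord0; rewrite !NB0.
  by move=> j; have := H (lift ord0 j); rewrite !NBl.
move=> [H0 Hj] i; case: (unliftP ord0 i) => [j ->|->]; first by rewrite !NBl.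
by rewrite !NB0.
Qed.

Lemma contact_split (R : realType) (A : finType) (d : nat) (l0 u0 : A -> R)
  (lj uj : A -> 'I_d -> R) a b :
  Num.max (l0 a) (l0 b) = Num.min (u0 a) (u0 b) ->
  (forall j, Num.max (lj a j) (lj b j) < Num.min (uj a j) (uj b j)) ->
  forall i : 'I_d.+1,
   if (val i == 0)%N
   then Num.max (NB l0 lj a i) (NB l0 lj b i) = Num.min (NB u0 uj a i) (NB u0 uj b i)
   else Num.max (NB l0 lj a i) (NB l0 lj b i) < Num.min (NB u0 uj a i) (NB u0 uj b i).
Proof.
move=> H0 Hj i; case: (unliftP ord0 i) => [j ->|->]; last by rewrite /= !NB0.
have -> : (val (lift (ord0 : 'I_d.+1) j) == 0)%N = false by [].
by rewrite !NBl.
Qed.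

Lemma strict4 (R : realType) (a1 b1 a2 b2 : R) :
  a1 < b1 -> a2 < b2 -> a1 < b2 -> a2 < b1 -> Num.max a1 a2 < Num.min b1 b2.
Proof. by move=> *; rewrite gt_max !lt_min; apply/andP; split; apply/andP; split. Qed.

Lemma eqmm (R : realType) (a1 b1 a2 b2 c : R) :
  a1 <= c -> a2 <= c -> c <= b1 -> c <= b2 -> (a1 = c \/ a2 = c) -> (b1 = c \/ b2 = c) ->
  Num.max a1 a2 = Num.min b1 b2.
Proof.
move=> h1 h2 h3 h4 h5 h6; rewrite maxEle minEle.
case: (leP a1 a2) => h7; case: (leP b1 b2) => h8; case: h5 => h5; case: h6 => h6; lra.
Qed.

Lemma mmXY (R : realType) : Num.max (0:R) 1 = Num.min 1 2.
Proof. apply: (@eqmm _ _ _ _ _ 1); try lra; by [left|right]. Qed.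
Lemma mmYX (R : realType) : Num.max (1:R) 0 = Num.min 2 1.
Proof. apply: (@eqmm _ _ _ _ _ 1); try lra; by [left|right]. Qed.
Lemma mmBx (R : realType) : Num.max (0:R) (-1) = Num.min 1 0.
Proof. apply: (@eqmm _ _ _ _ _ 0); try lra; by [left|right]. Qed.
Lemma mmBy (R : realType) : Num.max (1:R) 2 = Num.min 2 3.
Proof. apply: (@eqmm _ _ _ _ _ 2); try lra; by [left|right]. Qed.
Lemma mmxz (R : realType) : Num.max (-1:R) 0 = Num.min 0 2.
Proof. apply: (@eqmm _ _ _ _ _ 0); try lra; by [left|right]. Qed.
Lemma mmzy (R : realType) : Num.max (0:R) 2 = Num.min 2 3.
Proof. apply: (@eqmm _ _ _ _ _ 2); try lra; by [left|right]. Qed.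

Lemma strictBx (R : realType) (Lo Hi lv uv eps : R) (b : bool) :
  Lo <= lv -> lv <= uv -> uv <= Hi -> 0 < eps -> eps <= 1/4 -> Lo <= 0 -> 0 <= Hi ->
  Num.max (lv - eps) (Lo - 2) < Num.min (uv + eps) (if b then Hi + 4 else Hi + 2).
Proof. by case: b => *; apply: strict4; lra. Qed.

Lemma meetBx (R : realType) (Lo Hi lv uv eps : R) (b : bool) :
  Lo <= lv -> lv <= uv -> uv <= Hi -> 0 < eps -> eps <= 1/4 -> Lo <= 0 -> 0 <= Hi ->
  lv - eps <= (if b then Hi + 4 else Hi + 2) /\ Lo - 2 <= uv + eps.
Proof. by case: b => *; split; lra. Qed.

Lemma strictxz (R : realType) (Lo Hi : R) (b : bool) : Lo <= 0 -> 0 <= Hi ->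
  Num.max (Lo - 2) (if b then Hi + 3 else Lo - 2) <
  Num.min (if b then Hi + 4 else Hi + 2) (if b then Hi + 4 else Hi + 2).
Proof. by case: b => *; apply: strict4; lra. Qed.

Lemma strictzy (R : realType) (Lo Hi : R) (b : bool) : Lo <= 0 -> 0 <= Hi ->
  Num.max (if b then Hi + 3 else Lo - 2) (Lo - 2) <
  Num.min (if b then Hi + 4 else Hi + 2) (if b then Hi + 4 else Hi + 2).
Proof. by case: b => *; apply: strict4; lra. Qed.

Lemma meetxz (R : realType) (Lo Hi : R) (b : bool) : Lo <= 0 -> 0 <= Hi ->
  Lo - 2 <= (if b then Hi + 4 else Hi + 2) /\ (if b then Hi + 3 else Lo - 2) <= (if b then Hi + 4 else Hi + 2).
Proof. by case: b => *; split; lra. Qed.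

Lemma meetzy (R : realType) (Lo Hi : R) (b : bool) : Lo <= 0 -> 0 <= Hi ->
  (if b then Hi + 3 else Lo - 2) <= (if b then Hi + 4 else Hi + 2) /\ Lo - 2 <= (if b then Hi + 4 else Hi + 2).
Proof. by case: b => *; split; lra. Qed.

Definition o0 : 'I_3 := @Ordinal 3 0 isT.
Definition o1 : 'I_3 := @Ordinal 3 1 isT.
Definition o2 : 'I_3 := @Ordinal 3 2 isT.

Lemma extB_sym (V : finType) (e : rel V) (X Y : {set V}) :
  symmetric e -> forall a b, extB e X Y a b = extB e X Y b a.
Proof.
move=> sym [v|k] [w|k']; rewrite /extB //=; by rewrite orbC.
Qed.

Lemma meet_sym (R : realType) (A : finType) (k : nat) (l u : A -> 'I_k -> R) a b :
  boxes_meet l u a b -> boxes_meet l u b a.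
Proof. by move=> H i; case: (H i). Qed.

Lemma fwd (R : realType) (V : finType) (e : rel V) (X Y : {set V}) (d : nat) :
  (0 < d)%N -> simple_graph e -> bipartite_parts e X Y -> boxicity_le R e d ->
  in_CBU R (extB e X Y) d.+1.
Proof.
move=> hd [sym irr] [XY0 [XY1 bip]] [l [u [hlu hiff]]].
have notXY v : v \in X -> v \in Y -> False.
  move=> h1 h2; have : v \in X :&: Y by rewrite inE h1 h2.
  by rewrite XY0 inE.
have cover v : v \in X \/ v \in Y.
  have : v \in X :|: Y by rewrite XY1 inE.
  by rewrite inE => /orP.
clear XY0 XY1.
pose g (t : V * V * 'I_d) := Num.max (l t.1.2 t.2 - u t.1.1 t.2) (l t.1.1 t.2 - u t.1.2 t.2).
pose m := \big[Num.min/1]_(t | 0 < g t) g t.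
have mpos : 0 < m.
  apply: (big_ind (fun x => 0 < x)) => // x y hx hy; by rewrite lt_min hx hy.
have m1 : m <= 1 by exact: bigmin_le_id.
have mg : forall t, 0 < g t -> m <= g t.
  by move=> t h; exact: (bigmin_le_cond 1 g h).
pose eps := m / 4.
have eps0 : 0 < eps by rewrite /eps; lra.
have eps1 : eps <= 1/4 by rewrite /eps; lra.
have m4 : m = 4 * eps by rewrite /eps; lra.
pose Lo := \big[Num.min/0]_(t : V * 'I_d) l t.1 t.2.
pose Hi := \big[Num.max/0]_(t : V * 'I_d) u t.1 t.2.
have hLo v j : Lo <= l v j by exact: (bigmin_le 0 (v, j) (fun t => l t.1 t.2)).
have Lo0 : Lo <= 0 by exact: bigmin_le_id.
have hHi v j : u v j <= Hi by exact: (le_bigmax 0 (fun t => u t.1 t.2) (v, j)).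
have Hi0 : 0 <= Hi by exact: bigmax_ge_id.
have gE t : g t = Num.max (l t.1.2 t.2 - u t.1.1 t.2) (l t.1.1 t.2 - u t.1.2 t.2) by [].
clearbody g m eps Lo Hi.
pose c0l (a : V + 'I_3) : R := match a with
  | inl v => if v \in X then 0 else 1
  | inr k => if val k == 0%N then -1 else if val k == 1%N then 0 else 2 end.
pose c0u (a : V + 'I_3) : R := match a with
  | inl v => if v \in X then 1 else 2
  | inr k => if val k == 0%N then 0 else if val k == 1%N then 2 else 3 end.
pose cjl (a : V + 'I_3) (j : 'I_d) : R := match a with
  | inl v => l v j - eps
  | inr k => if (val k == 1%N) && (val j == 0%N) then Hi + 3 else Lo - 2 end.
pose cju (a : V + 'I_3) (j : 'I_d) : R := match a with
  | inl v => u v j + eps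
  | inr k => if val j == 0%N then Hi + 4 else Hi + 2 end.
have fatB v w : (forall j, cjl (inl v) j <= cju (inl w) j /\ cjl (inl w) j <= cju (inl v) j) ->
    boxes_meet l u v w.
  move=> H j; have [h1 h2] := H j; rewrite /cjl /cju in h1 h2.
  have := mg (v, w, j); rewrite gE /=.
  case: (ltP 0 (Num.max (l w j - u v j) (l v j - u w j))) => hg.
    move=> /(_ isT); rewrite le_max => /orP[] h; exfalso; lra.
  move: hg; rewrite ge_max => /andP[h3 h4] _; split; lra.
have sepB v w : ~ boxes_meet l u v w ->
    exists j, cju (inl v) j <= cjl (inl w) j \/ cju (inl w) j <= cjl (inl v) j.
  move=> nm.
  case: (boolP [forall j, (l v j <= u w j) && (l w j <= u v j)]) => [/forallP H | /forallPn [j Hj]].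
    by exfalso; apply: nm => j; have /andP[] := H j.
  exists j; rewrite /cjl /cju.
  have hpos : (0 < l w j - u v j) || (0 < l v j - u w j).
    move: Hj; rewrite negb_and -!ltNge => /orP[] h; apply/orP; [right|left]; lra.
  move: (mg (v, w, j)); rewrite gE /= lt_max le_max hpos => /(_ isT) /orP[] h;
    [left|right]; lra.
have strictB v w : boxes_meet l u v w -> forall j,
    Num.max (cjl (inl v) j) (cjl (inl w) j) < Num.min (cju (inl v) j) (cju (inl w) j).
  move=> H j; have [h1 h2] := H j; rewrite /cjl /cju.
  have := hlu v j; have := hlu w j => h3 h4.
  apply: strict4; lra.
have inBox v j : Lo - 2 < cjl (inl v) j /\ cju (inl v) j < Hi + 3.
  rewrite /cjl /cju; have := hLo v j; have := hHi v j; have := hlu v j; split; lra.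
have c0B v w : c0l (inl v) <= c0u (inl w).
  rewrite /c0l /c0u; case: ifP => _; case: ifP => _; lra.
exists (NB c0l cjl), (NB c0u cju).
have Hpos : forall a i, NB c0l cjl a i < NB c0u cju a i.
  move=> a i; case: (unliftP ord0 i) => [j ->|->]; rewrite ?NBl ?NB0.
    case: a => [v|k]; rewrite /cjl /cju /=.
      by have := hlu v j; lra.
    by case: ifP => h1; case: ifP => h2; try lra; move: h1; rewrite h2 andbF.
  case: a => [v|k]; rewrite /c0l /c0u /=; first by case: ifP => _; lra.
  by case: ifP => _; [lra | case: ifP => _; lra].
pose j0 : 'I_d := Ordinal hd.
pose Good (a b : V + 'I_3) :=
  [/\ (exists i, NB c0u cju a i <= NB c0l cjl b i \/ NB c0u cju b i <= NB c0l cjl a i),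
      (extB e X Y a b <-> boxes_meet (NB c0l cjl) (NB c0u cju) a b) &
      (boxes_meet (NB c0l cjl) (NB c0u cju) a b -> forall i : 'I_d.+1,
        if (val i == 0)%N
        then Num.max (NB c0l cjl a i) (NB c0l cjl b i) = Num.min (NB c0u cju a i) (NB c0u cju b i)
        else Num.max (NB c0l cjl a i) (NB c0l cjl b i) < Num.min (NB c0u cju a i) (NB c0u cju b i))].
have Gsym a b : Good a b -> Good b a.
  move=> [[i1 hi] hiff' hc]; split.
  - by exists i1; case: hi => h; [right|left].
  - rewrite extB_sym //; split => h.
      by apply: meet_sym; apply/hiff'.
    by apply/hiff'; apply: meet_sym.
  - move=> hm i0; have := hc (meet_sym hm) i0.
    by rewrite [Num.max (NB c0l cjl b i0) _]maxC [Num.min (NB c0u cju b i0) _]minC.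
have GLL v w : v != w -> Good (inl v) (inl w).
  move=> vw.
  have ne_same : (v \in X) = (w \in X) -> ~ boxes_meet l u v w.
    move=> same /(hiff v w vw) evw.
    case: (bip v w evw) => [][h1 h2].
      by rewrite same in h1; exact: notXY w h1 h2.
    by rewrite -same in h2; exact: notXY v h2 h1.
  split.
  - case: (cover v) => hv; case: (cover w) => hw.
    + have [j hj] := sepB v w (ne_same (etrans hv (esym hw))).
      by exists (lift ord0 j); rewrite !NBl.
    + have hwX : (w \in X) = false by apply/negP => h; exact: notXY w h hw.
      by exists ord0; left; rewrite !NB0 /c0u /c0l hv hwX; lra.
    + have hvX : (v \in X) = false by apply/negP => h; exact: notXY v h hv.
      by exists ord0; right; rewrite !NB0 /c0u /c0l hw hvX; lra.
    + have hwX : (w \in X) = false by apply/negP => h; exact: notXY w h hw.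
      have hvX : (v \in X) = false by apply/negP => h; exact: notXY v h hv.
      have [j hj] := sepB v w (ne_same (etrans hvX (esym hwX))).
      by exists (lift ord0 j); rewrite !NBl.
  - rewrite meet_split; split.
      move=> evw; have hm := (hiff v w vw).1 evw; split; first by split; exact: c0B.
      move=> j; have := strictB v w hm j.
      rewrite gt_max !lt_min => /andP[/andP[_ h1] /andP[h2 _]]; split; exact: ltW.
    by move=> [_ hj]; exact: (hiff v w vw).2 (fatB v w hj).
  - move=> hm; have [_ hj] := (meet_split _ _ _ _ _ _).1 hm.
    have hmo := fatB v w hj; have evw := (hiff v w vw).2 hmo.
    apply: contact_split; last exact: strictB.
    case: (bip v w evw) => [][h1 h2].
      have hwX : (w \in X) = false by apply/negP => h; exact: notXY w h h2.
      rewrite /c0l /c0u /= h1 hwX; exact: mmXY.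
    have hvX : (v \in X) = false by apply/negP => h; exact: notXY v h h1.
    rewrite /c0l /c0u /= h2 hvX; exact: mmYX.
have GLR v k : Good (inl v) (inr k).
  have hL j := hLo v j; have hH j := hHi v j; have hlu' j := hlu v j.
  case: k => [[|[|[|k]]] hk] //.
  -
    case: (cover v) => hv.
    + split.
      * by exists ord0; right; rewrite !NB0 /c0u /c0l /= ?hv; lra.
      * rewrite meet_split /extB /= ?hv; split => // _; split.
          by rewrite /c0l /c0u /= ?hv; split; lra.
        by move=> j; rewrite /cjl /cju /=; exact: (meetBx _ (hL j) (hlu' j) (hH j) eps0 eps1 Lo0 Hi0).
      * move=> _; apply: contact_split.
          rewrite /c0l /c0u /= ?hv; exact: mmBx.
        by move=> j; rewrite /cjl /cju /=; exact: (strictBx _ (hL j) (hlu' j) (hH j) eps0 eps1 Lo0 Hi0).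
    + have hvX : (v \in X) = false by apply/negP => h; exact: notXY v h hv.
      split.
      * by exists ord0; right; rewrite !NB0 /c0u /c0l /= ?hvX; lra.
      * rewrite meet_split /extB /= ?hvX; split => // [[[h _] _]].
        by move: h; rewrite /c0l /c0u /= ?hvX; lra.
      * move=> /meet_split [[h _] _]; move: h; rewrite /c0l /c0u /= ?hvX; lra.
  -
    have nm : ~ boxes_meet (NB c0l cjl) (NB c0u cju) (inl v) (inr (Ordinal hk)).
      move=> /meet_split [_ /(_ j0) [_ h]]; move: h; rewrite /cjl /cju /j0 /=.
      by have := hH (Ordinal hd); lra.
    split.
    * exists (lift ord0 j0); left; rewrite !NBl /cjl /cju /j0 /=.
      by have := hH (Ordinal hd); lra.
    * by rewrite /extB /=; split.
    * by move=> /nm.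
  -
    case: (cover v) => hv.
    + have hvY : (v \in Y) = false by apply/negP => h; exact: notXY v hv h.
      split.
      * by exists ord0; left; rewrite !NB0 /c0u /c0l /= ?hv; lra.
      * rewrite meet_split /extB /= hvY; split => // [[[_ h] _]].
        by move: h; rewrite /c0l /c0u /= ?hv; lra.
      * move=> /meet_split [[_ h] _]; move: h; rewrite /c0l /c0u /= ?hv; lra.
    + have hvX : (v \in X) = false by apply/negP => h; exact: notXY v h hv.
      split.
      * by exists ord0; left; rewrite !NB0 /c0u /c0l /= ?hvX; lra.
      * rewrite meet_split /extB /= ?hv; split => // _; split.
          by rewrite /c0l /c0u /= ?hvX; split; lra.
        by move=> j; rewrite /cjl /cju /=; exact: (meetBx _ (hL j) (hlu' j) (hH j) eps0 eps1 Lo0 Hi0).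
      * move=> _; apply: contact_split.
          rewrite /c0l /c0u /= ?hvX; exact: mmBy.
        by move=> j; rewrite /cjl /cju /=; exact: (strictBx _ (hL j) (hlu' j) (hH j) eps0 eps1 Lo0 Hi0).
have GRR k k' : (val k < val k')%N -> Good (inr k) (inr k').
  case: k => [[|[|[|k]]] hk]; case: k' => [[|[|[|k']]] hk'] //= _.
  -
    split.
    + by exists ord0; left; rewrite !NB0 /c0u /c0l /=; lra.
    + rewrite meet_split /extB /=; split => // _; split.
        by rewrite /c0l /c0u /=; split; lra.
      by move=> j; rewrite /cjl /cju /=; exact: meetxz.
    + move=> _; apply: contact_split.
        rewrite /c0l /c0u /=; exact: mmxz.
      by move=> j; rewrite /cjl /cju /=; exact: strictxz.
  -
    split.
    + by exists ord0; left; rewrite !NB0 /c0u /c0l /=; lra.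
    + rewrite meet_split /extB /=; split => // [[[_ h] _]].
      by move: h; rewrite /c0l /c0u /=; lra.
    + move=> /meet_split [[_ h] _]; move: h; rewrite /c0l /c0u /=; lra.
  -
    split.
    + by exists ord0; left; rewrite !NB0 /c0u /c0l /=; lra.
    + rewrite meet_split /extB /=; split => // _; split.
        by rewrite /c0l /c0u /=; split; lra.
      by move=> j; rewrite /cjl /cju /=; exact: meetzy.
    + move=> _; apply: contact_split.
        rewrite /c0l /c0u /=; exact: mmzy.
      by move=> j; rewrite /cjl /cju /=; exact: strictzy.
have Gin a b : a != b -> Good a b.
  case: a => [v|k]; case: b => [w|k'] hab.
  - apply: GLL; move: hab; apply: contra => /eqP -> //.
  - exact: GLR.
  - exact: Gsym (GLR w k).
  - case: (ltngtP (val k) (val k')) => h; first exact: GRR.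
      exact: Gsym (GRR _ _ h).
    by move/val_inj: h => E; rewrite E eqxx in hab.
split; first exact: Hpos.
split; first by move=> a b /Gin [].
split; first by move=> a b /Gin [].
by move=> a b /Gin [].
Qed.

Lemma touchP (R : realType) (a1 b1 a2 b2 : R) : a1 < b1 -> a2 < b2 ->
  Num.max a1 a2 = Num.min b1 b2 -> a1 = b2 \/ b1 = a2.
Proof.
move=> h1 h2; rewrite maxEle minEle.
case: (leP a1 a2) => h3; case: (leP b1 b2) => h4 E.
- right; lra.
- have : a2 = b2 by []. lra.
- have : a1 = b1 by []. lra.
- left; lra.
Qed.

Lemma zlem (R : realType) (lx ux ly uy lz uz : R) : lx < ux -> ly < uy -> lz < uz ->
  (lz = ux \/ uz = lx) -> (lz = uy \/ uz = ly) -> ly <> ux /\ uy <> lx.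
Proof. move=> *; split => ?; intuition lra. Qed.

Lemma slem (R : realType) (lx ux ly uy l1 u1 l2 u2 lw uw : R) :
  lx < ux -> ly < uy -> l1 < u1 -> l2 < u2 -> lw < uw ->
  l1 = ux -> u2 = lx -> (lw = u1 \/ uw = l1) -> (lw = u2 \/ uw = l2) ->
  (lw = uy \/ uw = ly) -> ly <> ux -> uy <> lx -> False.
Proof. move=> *; intuition lra. Qed.

Lemma caseA (R : realType) (lx ux ly uy lw uw lv uv lw0 uw0 : R) :
  lx < ux -> ly < uy -> lw < uw -> lv < uv -> lw0 < uw0 ->
  ly <> ux -> uy <> lx -> uw0 = ux -> uw <> ux -> lv = ux ->
  (lw = uv \/ uw = lv) -> (lw = uy \/ uw = ly) -> (lw0 = uy \/ uw0 = ly) -> False.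
Proof. move=> *; intuition lra. Qed.

Lemma caseA' (R : realType) (lx ux ly uy lw uw lv uv lw0 uw0 : R) :
  lx < ux -> ly < uy -> lw < uw -> lv < uv -> lw0 < uw0 ->
  ly <> ux -> uy <> lx -> lw0 = lx -> lw <> lx -> uv = lx ->
  (lw = uv \/ uw = lv) -> (lw = uy \/ uw = ly) -> (lw0 = uy \/ uw0 = ly) -> False.
Proof. move=> *; intuition lra. Qed.

Lemma meet2 (R : realType) (a b c d : R) : a < b -> c < d ->
  ((a = c \/ a = d \/ b = c \/ b = d) \/ (a <= c <= b) \/ (c <= a <= d)) ->
  a <= d /\ c <= b.
Proof. move=> *; intuition lra. Qed.

Lemma notboth (R : realType) (a b c d : R) : a < b -> c < d -> b = c -> a <> d.
Proof. move=> *; lra. Qed.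

Lemma conn_const (V : finType) (e : rel V) (T : eqType) (f : V -> T) :
  connected_graph e -> (forall a b, e a b -> f a = f b) -> forall a b, f a = f b.
Proof.
move=> conn H a b; have /connectP[p pth ->] := conn a b.
elim: p a pth => //= c p IH a /andP[eac pth].
by rewrite (H _ _ eac); exact: IH.
Qed.

Lemma neighbor (V : finType) (e : rel V) (a b : V) :
  connected_graph e -> a != b -> exists c, e a c.
Proof.
move=> conn nab; have /connectP[p pth E] := conn a b.
case: p pth E => [_ E|c p /= /andP[eac _] _]; last by exists c.
by rewrite E eqxx in nab.
Qed.


Lemma key (R : realType) (V : finType) (e : rel V) (X Y : {set V})
  (L U : V + 'I_3 -> R) :
  symmetric e -> connected_graph e -> bipartite_parts e X Y ->
  (forall a, L a < U a) ->
  (forall a b, extB e X Y a b -> L a = U b \/ U a = L b) ->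
  forall v w : V, L (inl v) <= U (inl w).
Proof.
move=> sym conn [XY0 [XY1 bip]] pos touch.
set xx : V + 'I_3 := inr o0; set yy : V + 'I_3 := inr o2; set zz : V + 'I_3 := inr o1.
have notXY v : v \in X -> v \in Y -> False.
  move=> h1 h2; have : v \in X :&: Y by rewrite inE h1 h2.
  by rewrite XY0 inE.
have cover v : v \in X \/ v \in Y.
  have : v \in X :|: Y by rewrite XY1 inE.
  by rewrite inE => /orP.
have Tx v : v \in X -> L (inl v) = U xx \/ U (inl v) = L xx.
  by move=> h; apply: touch; rewrite /extB /= h.
have Ty v : v \in Y -> L (inl v) = U yy \/ U (inl v) = L yy.
  by move=> h; apply: touch; rewrite /extB /= h ?orbT.
have Txy : L zz = U xx \/ U zz = L xx by apply: touch.
have Tzy : L zz = U yy \/ U zz = L yy by apply: touch.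
have [Z1 Z2] := zlem (pos xx) (pos yy) (pos zz) Txy Tzy.
have Te v w : e v w -> L (inl v) = U (inl w) \/ U (inl v) = L (inl w).
  by move=> h; apply: touch.
have edgeXY v w : e v w -> v \in X -> w \in Y.
  move=> h hv; case: (bip v w h) => [[]//|[hv' _]]; by case: (notXY v).
have edgeYX v w : e v w -> v \in Y -> w \in X.
  move=> h hv; case: (bip v w h) => [[hv' _]|[]//]; by case: (notXY v).
have sideX : forall v1 v2, v1 \in X -> v2 \in X ->
    (L (inl v1) == U xx) = (L (inl v2) == U xx).
  pose q a := if a \in X then L (inl a) == U xx
              else [exists b, e a b && (L (inl b) == U xx)].
  have Hq : forall a b, e a b -> q a = q b.
    have Hq1 : forall a b, e a b -> a \in X -> q a = q b.
      move=> a b hab ha; have hb := edgeXY _ _ hab ha.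
      have hbX : b \notin X by apply/negP => hbX; case: (notXY b).
      rewrite /q ha (negbTE hbX).
      case: eqP => [E|NE].
        by symmetry; apply/existsP; exists a; rewrite sym hab E eqxx.
      symmetry; apply/negbTE/negP => /existsP[c /andP[ebc /eqP Ec]].
      have hc := edgeYX _ _ ebc hb.
      have [//|Ua] := Tx a ha.
      have eba : e b a by rewrite sym.
      exact: (slem (pos xx) (pos yy) (pos (inl c)) (pos (inl a)) (pos (inl b))
               Ec Ua (Te _ _ ebc) (Te _ _ eba) (Ty b hb) Z1 Z2).
    move=> a b hab; case: (cover a) => ha; first exact: Hq1.
    by symmetry; apply: Hq1; [rewrite sym | exact: edgeYX hab ha].
  move=> v1 v2 h1 h2; have := conn_const conn Hq v1 v2.
  by rewrite /q h1 h2.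
have sideY : forall v1 v2, v1 \in Y -> v2 \in Y ->
    (L (inl v1) == U yy) = (L (inl v2) == U yy).
  pose q a := if a \in Y then L (inl a) == U yy
              else [exists b, e a b && (L (inl b) == U yy)].
  have Hq : forall a b, e a b -> q a = q b.
    have Hq1 : forall a b, e a b -> a \in Y -> q a = q b.
      move=> a b hab ha; have hb := edgeYX _ _ hab ha.
      have hbY : b \notin Y by apply/negP => hbY; case: (notXY b).
      rewrite /q ha (negbTE hbY).
      case: eqP => [E|NE].
        by symmetry; apply/existsP; exists a; rewrite sym hab E eqxx.
      symmetry; apply/negbTE/negP => /existsP[c /andP[ebc /eqP Ec]].
      have hc := edgeXY _ _ ebc hb.
      have [//|Ua] := Ty a ha.
      have eba : e b a by rewrite sym.
      apply: (slem (pos yy) (pos xx) (pos (inl c)) (pos (inl a)) (pos (inl b))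
               Ec Ua (Te _ _ ebc) (Te _ _ eba) (Tx b hb)).
      - by move=> E; apply: Z2.
      - by move=> E; apply: Z1.
    move=> a b hab; case: (cover a) => ha; last exact: Hq1.
    by symmetry; apply: Hq1; [rewrite sym | exact: edgeXY hab ha].
  move=> v1 v2 h1 h2; have := conn_const conn Hq v1 v2.
  by rewrite /q h1 h2.
have mixed : forall v w, v \in X -> w \in Y ->
    L (inl v) <= U (inl w) /\ L (inl w) <= U (inl v).
  move=> v w hv hw.
  have vw : v != w by apply/eqP => E; subst; case: (notXY w).
  case: (Tx v hv) => sv.
  -
    have allR : forall v', v' \in X -> L (inl v') = U xx.
      move=> v' hv'; apply/eqP; rewrite (sideX v' v hv' hv); exact/eqP.
    case: (boolP [exists w0, (w0 \in Y) && (U (inl w0) == U xx)]).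
    + move=> /existsP[w0 /andP[hw0 /eqP Ew0]].
      case: (eqVneq (U (inl w)) (U xx)) => Ew.
        by apply: meet2; [exact: pos | exact: pos | left; right; left; rewrite sv Ew].
      have wv : w != v by rewrite eq_sym.
      have [v' ev'] := neighbor conn wv.
      exfalso.
      have hv' := edgeYX _ _ ev' hw.
      move: Ew => /eqP Ew.
      exact: (caseA (pos xx) (pos yy) (pos (inl w)) (pos (inl v')) (pos (inl w0))
        Z1 Z2 Ew0 Ew (allR _ hv') (Te _ _ ev') (Ty w hw) (Ty w0 hw0)).
    + move=> /existsPn NE.
      pose f a := if a \in X then U (inl a) else L (inl a).
      have Hf : forall a b, e a b -> f a = f b.
        have Hf1 : forall a b, e a b -> a \in X -> f a = f b.
          move=> a b hab ha; have hb := edgeXY _ _ hab ha.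
          have hbX : b \notin X by apply/negP => hbX; case: (notXY b).
          rewrite /f ha (negbTE hbX).
          have := NE b; rewrite hb /= => /eqP NEb.
          have := Te _ _ hab; rewrite allR //; case=> // E.
          by exfalso; apply: NEb.
        move=> a b hab; case: (cover a) => ha; first exact: Hf1.
        by symmetry; apply: Hf1; [rewrite sym | exact: edgeYX hab ha].
      have := conn_const conn Hf v w; rewrite /f hv.
      have -> : (w \in X) = false by apply/negP => h; case: (notXY w).
      have := pos (inl w); have := pos (inl v); move=> *; split; lra.
  -
    have allL : forall v', v' \in X -> U (inl v') = L xx.
      have nv : L (inl v) != U xx by apply/eqP; exact: (notboth (pos (inl v)) (pos xx) sv).
      move=> v' hv'; have := sideX v' v hv' hv; rewrite (negbTE nv) => /eqP NE'.
      by case: (Tx v' hv').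
    case: (boolP [exists w0, (w0 \in Y) && (L (inl w0) == L xx)]).
    + move=> /existsP[w0 /andP[hw0 /eqP Ew0]].
      case: (eqVneq (L (inl w)) (L xx)) => Ew.
        by apply: meet2; [exact: pos | exact: pos | left; right; right; left; rewrite sv Ew].
      have wv : w != v by rewrite eq_sym.
      have [v' ev'] := neighbor conn wv.
      exfalso.
      have hv' := edgeYX _ _ ev' hw.
      move: Ew => /eqP Ew.
      exact: (caseA' (pos xx) (pos yy) (pos (inl w)) (pos (inl v')) (pos (inl w0))
        Z1 Z2 Ew0 Ew (allL _ hv') (Te _ _ ev') (Ty w hw) (Ty w0 hw0)).
    + move=> /existsPn NE.
      pose f a := if a \in X then L (inl a) else U (inl a).
      have Hf : forall a b, e a b -> f a = f b.
        have Hf1 : forall a b, e a b -> a \in X -> f a = f b.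
          move=> a b hab ha; have hb := edgeXY _ _ hab ha.
          have hbX : b \notin X by apply/negP => hbX; case: (notXY b).
          rewrite /f ha (negbTE hbX).
          have := NE b; rewrite hb /= => /eqP NEb.
          have := Te _ _ hab; rewrite (allL a ha); case=> // E.
          by exfalso; apply: NEb.
        move=> a b hab; case: (cover a) => ha; first exact: Hf1.
        by symmetry; apply: Hf1; [rewrite sym | exact: edgeYX hab ha].
      have := conn_const conn Hf v w; rewrite /f hv.
      have -> : (w \in X) = false by apply/negP => h; case: (notXY w).
      move=> E.
      by apply: meet2; [exact: pos | exact: pos | left; right; left].
move=> v w; case: (cover v) => hv; case: (cover w) => hw.
- case: (Tx v hv) => sv.
    have : L (inl w) == U xx by rewrite -(sideX v w hv hw) sv eqxx.
    by move/eqP => sw; rewrite sv -sw; exact: ltW (pos _).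
  have nv : L (inl v) != U xx by apply/eqP; exact: (notboth (pos (inl v)) (pos xx) sv).
  have := sideX v w hv hw; rewrite (negbTE nv) => /esym/negbT/eqP nw.
  case: (Tx w hw) => [/nw []|sw]; rewrite sw -sv; exact: ltW (pos _).
- exact: (mixed v w hv hw).1.
- exact: (mixed w v hw hv).2.
- case: (Ty v hv) => sv.
    have : L (inl w) == U yy by rewrite -(sideY v w hv hw) sv eqxx.
    by move/eqP => sw; rewrite sv -sw; exact: ltW (pos _).
  have nv : L (inl v) != U yy by apply/eqP; exact: (notboth (pos (inl v)) (pos yy) sv).
  have := sideY v w hv hw; rewrite (negbTE nv) => /esym/negbT/eqP nw.
  case: (Ty w hw) => [/nw []|sw]; rewrite sw -sv; exact: ltW (pos _).
Qed.

Lemma extB_irr (V : finType) (e : rel V) (X Y : {set V}) :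
  irreflexive e -> forall a, extB e X Y a a = false.
Proof. by move=> irr [v|[[|[|[|k]]] hk]]; rewrite /extB //=; exact: irr. Qed.

Lemma back (R : realType) (V : finType) (e : rel V) (X Y : {set V}) (d : nat) :
  simple_graph e -> connected_graph e -> bipartite_parts e X Y ->
  in_CBU R (extB e X Y) d.+1 -> boxicity_le R e d.
Proof.
move=> [sym irr] conn bip [l [u [hpos [_ [hiff hcon]]]]].
pose L a := l a ord0; pose U a := u a ord0.
have pos a : L a < U a by exact: hpos.
have touch a b : extB e X Y a b -> L a = U b \/ U a = L b.
  move=> hab; have ab : a != b by apply/eqP => E; rewrite E extB_irr in hab.
  have := hcon a b ab ((hiff a b ab).1 hab) ord0; rewrite /= => E.
  exact: touchP (pos a) (pos b) E.
have K := key sym conn bip pos touch.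
exists (fun v j => l (inl v) (lift ord0 j)), (fun v j => u (inl v) (lift ord0 j)); split.
  by move=> v j; exact: ltW (hpos _ _).
move=> v w vw.
have vw' : inl v != inl w :> V + 'I_3 by apply: contra vw => /eqP [->].
have -> : e v w = extB e X Y (inl v) (inl w) by [].
rewrite (hiff _ _ vw'); split.
  by move=> hm j; exact: hm.
move=> hm i; case: (unliftP ord0 i) => [j ->|->]; first exact: hm.
by split; [exact: K | exact: K].
Qed.

Theorem mainTheorem8 (R : realType) (V : finType) (e : rel V) (X Y : {set V}) :
  simple_graph e -> connected_graph e -> bipartite_parts e X Y ->
  forall d : nat, (0 < d)%N ->
    (boxicity_le R e d <-> in_CBU R (extB e X Y) d.+1).
Proof.
move=> hs hc hb d hd; split => h.
  exact: fwd hd hs hb h.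
exact: back hs hc hb h.
Qed.
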